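(* 1. For every $i\in\mathcal{N}$, the random variable $Z_{i,\epsilon}$ converges surely (i.e. pointwise for every outcome) to $Z_i$ as $\epsilon\to+\infty$. 2. The limit $\lim_{\epsilon\to+\infty}\gamma(\epsilon)$ exists and $$\lim_{\epsilon\to+\infty}\Big(E\{Z_{i,\epsilon}\mid A_i=0,Y_i=1\}-E\{Z_{i,\epsilon}\mid A_i=1,Y_i=1\}\Big)=E\{Z_i\mid A_i=0,Y_i=1\}-E\{Z_i\mid A_i=1,Y_i=1\},$$ i.e. the algorithm $\mathscr{A}$ is $\gamma_\infty$-fair with $\gamma_\infty=\lim_{\epsilon\to+\infty}\gamma(\epsilon)$.
   Context: There are $n$ individuals indexed by $\mathcal{N}=\{1,\dots,n\}$. Individual $i$ is described by a random tuple $(X_i,A_i,Y_i)$, with features $X_i\in\mathcal{X}$, protected attribute $A_i\in\{0,1\}$ and qualification state $Y_i\in\{0,1\}$; the tuples are i.i.d. with a common distribution $\mathsf{F}$. A fixed function $r:\mathcal{X}\to\mathcal{R}$ is given, with $\mathcal{R}\subset[0,1]$ finite, and $R_i=r(X_i)$. Conditioning events $\{A_i=a,Y_i=1\}$ are assumed to have positive probability. For $\epsilon\ge0$, the exponential mechanism $\mathscr{A}_\epsilon$ selects $i$ with probability $Z_{i,\epsilon}=\exp(\epsilon R_i/2)/\sum_{j=1}^n\exp(\epsilon R_j/2)$ given the scores, and $\gamma(\epsilon)=E\{Z_{i,\epsilon}\mid A_i=0,Y_i=1\}-E\{Z_{i,\epsilon}\mid A_i=1,Y_i=1\}$. The algorithm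 $\mathscr{A}$ selects uniformly at random among the individuals with the highest score; with $N_{\max}=|\{i: R_i=\max_jR_j\}|$, let $Z_i=0$ if $R_i\ne\max_jR_j$ and $Z_i=1/N_{\max}$ otherwise, so $Z_i$ is the probability that $\mathscr{A}$ selects $i$ given the scores. An algorithm selecting one individual is $\gamma$-fair if $\Pr\{K_i=1\mid A_i=0,Y_i=1\}-\Pr\{K_i=1\mid A_i=1,Y_i=1\}=\gamma$, where $K_i$ is the indicator that $i$ is selected. *)

(* Defs.v *)
From HB Require Import structures.
From mathcomp Require Import all_boot all_order all_algebra.
From mathcomp Require Import all_classical all_reals all_analysis.
Set Implicit Arguments. Unset Strict Implicit. Unset Printing Implicit Defensive.
Import Order.TTheory GRing.Theory Num.Theory.
Import numFieldNormedType.Exports.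
Local Open Scope classical_set_scope.
Local Open Scope ring_scope.

Section Fair.
Context {d dX : measure_display} {T : measurableType d} {R : realType}
  {Xt : measurableType dX}.

Definition tupl (n : nat) (X : 'I_n -> T -> Xt) (A Y : 'I_n -> T -> bool)
  (i : 'I_n) : T -> Xt * bool * bool := fun w => (X i w, A i w, Y i w).

Definition ident_distr (P : probability T R) n (V : 'I_n -> T -> Xt * bool * bool) :=
  forall i j (S : set (Xt * bool * bool)), measurable S ->
    P (V i @^-1` S) = P (V j @^-1` S).

(* the tuples are mutually independent (product rule; taking S j = setT
   recovers every finite subfamily) *)
Definition mutual_indep (P : probability T R) n (V : 'I_n -> T -> Xt * bool * bool) :=
  forall S : 'I_n -> set (Xt * bool * bool), (forall j, measurable (S j)) ->
    P (\bigcap_(j in [set: 'I_n]) (V j @^-1` S j)) = (\prod_(j < n) P (V j @^-1` S j))%E.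

Definition evAY n (A Y : 'I_n -> T -> bool) (i : 'I_n) (a : bool) : set T :=
  [set w | A i w = a /\ Y i w = true].

Definition condE (P : probability T R) (W : T -> R) (B : set T) : R :=
  fine (\int[P]_(w in B) (W w)%:E) / fine (P B).

Definition Zeps n (Rs : 'I_n -> T -> R) (eps : R) (i : 'I_n) (w : T) : R :=
  expR (eps * Rs i w / 2) / \sum_(j < n) expR (eps * Rs j w / 2).

Definition is_top n (Rs : 'I_n -> T -> R) (w : T) (i : 'I_n) : bool :=
  [forall j, Rs j w <= Rs i w].

Definition Zmax n (Rs : 'I_n -> T -> R) (i : 'I_n) (w : T) : R :=
  if is_top Rs w i then (#|[set j | is_top Rs w j]|%:R)^-1 else 0.

Definition gamma (P : probability T R) n (A Y : 'I_n -> T -> bool)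
  (Rs : 'I_n -> T -> R) (i : 'I_n) (eps : R) : R :=
  condE P (Zeps Rs eps i) (evAY A Y i false) - condE P (Zeps Rs eps i) (evAY A Y i true).

End Fair.

(* Main.v *)
Require Import Defs.
From HB Require Import structures.
From mathcomp Require Import all_boot all_order all_algebra.
From mathcomp Require Import all_classical all_reals all_analysis.
From mathcomp Require Import ring lra.
From mathcomp Require Import measurable_realfun.
Import Order.TTheory GRing.Theory Num.Theory.
Import numFieldNormedType.Exports.
Local Open Scope classical_set_scope.
Local Open Scope ring_scope.

Section ZL.
Context {R : realType}.


Lemma expR_lin0 (c : R) : c < 0 -> expR (x * c) @[x --> +oo] --> 0.
Proof.
move=> c0.
have -> : (fun x => expR (x * c)) = (fun y => expR (- y)) \o (fun x => x * (- c)).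
  by apply: funext => x /=; rewrite mulrN opprK.
apply: cvg_comp; last exact: cvgr_expR.
apply/cvgryPge => A.
near=> x.
rewrite -ler_pdivrMr; last by rewrite oppr_gt0.
near: x.
apply: nbhs_pinfty_ge.
exact: num_real.
Unshelve. all: by end_near.
Qed.

Lemma cvg_bigsum (I : finType) (f : I -> R -> R) (l : I -> R) :
  (forall j, f j x @[x --> +oo] --> l j) ->
  \sum_j f j x @[x --> +oo] --> \sum_j l j.
Proof.
move=> h; rewrite /index_enum; elim: (Finite.enum I) => [|j s IH].
  rewrite big_nil; under eq_fun do rewrite big_nil; exact: cvg_cst.
rewrite big_cons; under eq_fun do rewrite big_cons.
exact: cvgD.
Qed.


Lemma sum_pos {n : nat} (a : 'I_n -> R) (x : R) :
  forall j, expR (x * a j / 2) <= \sum_(k < n) expR (x * a k / 2).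
Proof.
move=> j; rewrite (bigD1 j) //= lerDl.
by apply: sumr_ge0 => k _; exact: expR_ge0.
Qed.

Lemma Zlim (n : nat) (a : 'I_n -> R) (i : 'I_n) :
  expR (eps * a i / 2) / \sum_(j < n) expR (eps * a j / 2) @[eps --> +oo] -->
  (if [forall j, a j <= a i] then (#|[set j | [forall k, a k <= a j]]|%:R)^-1 else 0 : R).
Proof.
case: ifP => [/forallP top|/negbT/forallPn [j]]; last first.
  rewrite -ltNge => aij.
  apply: (@squeeze_cvgr _ _ _ _ (fun=> 0) (fun eps => expR (eps * ((a i - a j) / 2)))).
  - near=> eps.
    have S0 : 0 < \sum_(k < n) expR (eps * a k / 2).
      exact: (lt_le_trans (expR_gt0 _) (sum_pos a eps j)).
    rewrite divr_ge0 ?expR_ge0 ?(ltW S0) //=.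
    rewrite ler_pdivrMr //.
    apply: (@le_trans _ _ (expR (eps * ((a i - a j) / 2)) * expR (eps * a j / 2))).
      rewrite -expRD; have -> : eps * ((a i - a j) / 2) + eps * a j / 2 = eps * a i / 2 by ring.
      done.
    by rewrite ler_wpM2l ?expR_ge0 // sum_pos.
  - exact: cvg_cst.
  - by apply: expR_lin0; rewrite pmulr_llt0 // subr_lt0.
have E eps : expR (eps * a i / 2) / \sum_(j < n) expR (eps * a j / 2) =
    (\sum_(j < n) expR (eps * (a j - a i) / 2))^-1.
  have -> : \sum_(j < n) expR (eps * (a j - a i) / 2) =
      (\sum_(j < n) expR (eps * a j / 2)) * (expR (eps * a i / 2))^-1.
    rewrite mulr_suml; apply: eq_bigr => j _.
    by rewrite -expRN -expRD; congr expR; ring.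
  by rewrite invfM invrK mulrC.
under eq_fun do rewrite E.
have Hc : \sum_(j < n) (if a j == a i then 1 else 0) = (#|[set j | [forall k, a k <= a j]]|%:R : R).
  rewrite (eq_bigr (fun j : 'I_n => if j \in [set j0 : 'I_n | [forall k, a k <= a j0]] then (1:R) else 0)).
    by rewrite -big_mkcond /= sumr_const.
  move=> j _.
  have eqv : (a j == a i) = (j \in [set j0 : 'I_n | [forall k, a k <= a j0]]).
    apply/idP/idP => [/eqP aji|/set_mem /= /forallP h].
    - by apply: mem_set => /=; apply/forallP => k; rewrite aji top.
    - by apply/eqP; apply/eqP; rewrite eq_le h top.
  by rewrite eqv.
apply: cvgV.
  rewrite pnatr_eq0 -lt0n; apply/card_gt0P; exists i.
  by apply: mem_set => /=; apply/forallP.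
rewrite -Hc; apply: cvg_bigsum => j.
case: eqP => [->|/eqP ne].
  under eq_fun do rewrite subrr mulr0 mul0r expR0.
  exact: cvg_cst.
under eq_fun do rewrite -mulrA.
apply: expR_lin0; rewrite pmulr_llt0 // subr_lt0 lt_neqAle ne top //.
Unshelve. all: by end_near.
Qed.


Lemma Zeps_01 {n : nat} (a : 'I_n -> R) (i : 'I_n) (eps : R) :
  0 <= expR (eps * a i / 2) / \sum_(j < n) expR (eps * a j / 2) <= 1.
Proof.
have S0 : 0 < \sum_(k < n) expR (eps * a k / 2).
  exact: (lt_le_trans (expR_gt0 _) (sum_pos a eps i)).
rewrite divr_ge0 ?expR_ge0 ?(ltW S0) //= ler_pdivrMr // mul1r.
exact: sum_pos.
Qed.

End ZL.

Theorem lemma1 (d dX : measure_display) (T : measurableType d) (R : realType)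
  (Xt : measurableType dX) (P : probability T R) (n : nat)
  (X : 'I_n -> T -> Xt) (A Y : 'I_n -> T -> bool) (r : Xt -> R)
  (hX : forall i, measurable_fun setT (X i))
  (hA : forall i, measurable_fun setT (A i))
  (hY : forall i, measurable_fun setT (Y i))
  (hr : measurable_fun setT r)
  (hr01 : forall x, 0 <= r x <= 1)
  (hrfin : finite_set (range r))
  (hid : ident_distr P (tupl X A Y))
  (hind : mutual_indep P (tupl X A Y))
  (hpos : forall i a, (0 < P (evAY A Y i a))%E) :
  let Rs := fun i w => r (X i w) in
  (forall i w, Zeps Rs eps i w @[eps --> +oo] --> Zmax Rs i w) /\
  (forall i, gamma P A Y Rs i eps @[eps --> +oo] -->
     condE P (Zmax Rs i) (evAY A Y i false) - condE P (Zmax Rs i) (evAY A Y i true)).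
Proof.
move=> Rs.
have P1 : forall i w, Zeps Rs eps i w @[eps --> +oo] --> Zmax Rs i w.
  by move=> i w; rewrite /Zeps /Zmax /is_top; exact: (Zlim _ (fun j => Rs j w) i).
split => // i.
have mR j : measurable_fun setT (Rs j) := measurableT_comp hr (hX j).
have mE (eps : R) j : measurable_fun setT (fun w => expR (eps * Rs j w / 2)).
  apply: measurableT_comp; first exact: measurable_realfun.measurable_expR.
  apply: measurable_funM; last exact: measurable_cst.
  apply: measurable_funM; first exact: measurable_cst.
  exact: mR.
have mZ (eps : R) : measurable_fun setT (Zeps Rs eps i).
  have -> : Zeps Rs eps i = (fun w => expR (eps * Rs i w / 2) *
       expR (- ln (\sum_(j < n) expR (eps * Rs j w / 2)))).
    apply: funext => w; rewrite /Zeps expRN lnK //.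
    rewrite posrE; exact: (lt_le_trans (expR_gt0 _) (sum_pos _ eps i)).
  apply: measurable_funM; first exact: mE.
  apply: measurableT_comp; first exact: measurable_realfun.measurable_expR.
  apply: measurable_funN.
  apply: measurableT_comp; first exact: measurable_realfun.measurable_ln.
  by apply: measurable_sum => j; exact: mE.
have key : forall b (u : R^nat), u k @[k --> \oo] --> +oo ->
    condE P (Zeps Rs (u k) i) (evAY A Y i b) @[k --> \oo] -->
    condE P (Zmax Rs i) (evAY A Y i b).
  move=> b u hu.
  set B := evAY A Y i b.
  have mB : measurable B.
    have -> : B = (A i @^-1` [set b]) `&` (Y i @^-1` [set true]).
      by apply/seteqP; split => w /=.
    apply: measurableI.
      by rewrite -[_ @^-1` _]setTI; apply: hA.
    by rewrite -[_ @^-1` _]setTI; apply: hY.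
  have mf : forall k, measurable_fun B (fun w => (Zeps Rs (u k) i w)%:E).
    by move=> k; apply/measurable_EFinP; exact: measurable_funTS.
  have f_f : forall w, B w -> (Zeps Rs (u k) i w)%:E @[k --> \oo] --> (Zmax Rs i w)%:E.
    move=> w _; apply: cvg_EFin; first exact: nearW.
    exact: (cvg_comp _ _ hu (P1 i w)).
  have ig : P.-integrable B (cst 1%E).
    exact: (finite_measure_integrable_cst P 1 mB).
  have bnd : forall k w, B w -> (`|(Zeps Rs (u k) i w)%:E| <= cst 1%E w)%E.
    move=> k w _; rewrite /= lee_fin.
    have /andP[h0 h1] := Zeps_01 (fun j => Rs j w) i (u k).
    by rewrite ger0_norm.
  have fing : forall w, B w -> (cst 1%E w : \bar R) \is a fin_num by [].
  have cv := dominated_cvg mB mf f_f fing ig bnd.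
  have iZ := lebesgue_integral_dominated_convergence.dominated_integrable mB _ _ _ mf f_f ig bnd.
  have fin := integrable_fin_num mB iZ.
  rewrite -(fineK fin) in cv.
  rewrite /condE; apply: cvgM; last exact: cvg_cst.
  exact: (fine_cvg cv).
apply/cvg_pinftyP => u hu.
apply: cvgB; exact: key.
Qed.
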